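(* Let $U\in\mathbb{R}^{n\times d}$, let $\mathbf{x}_*\in\mathbb{R}^d$ be an $s$-sparse signal, $\mathbf{e}\in\mathbb{R}^n$, and $\mathbf{y}=U\mathbf{x}_*+\mathbf{e}$. Assume \[ \gamma := \delta_s + \sqrt{2}\,\theta_{s,s} + \delta_{3s} < 1 . \] Let $\Delta_1,\Delta_2,\ldots$ be a sequence with $\|\mathbf{x}_1-\mathbf{x}_*\|_2\le\Delta_1$ and $\Delta_{t+1}=\gamma\Delta_t+(1+\sqrt{2})\sqrt{s}\|U^\top\mathbf{e}\|_\infty$ for $t\ge1$. If Algorithm 1 is run with \[ \lambda_t=\frac{\delta_s+\sqrt{2}\theta_{s,s}}{\sqrt{s}}\Delta_t+\|U^\top\mathbf{e}\|_\infty, \] then for all $t\ge0$: (i) $|\mathcal{S}_{t+1}\setminus\mathcal{S}_*|\le s$, and (ii) $\|\mathbf{x}_{t+1}-\mathbf{x}_*\|_2\le\gamma^t\Delta_1+\frac{1-\gamma^t}{1-\gamma}(1+\sqrt{2})\sqrt{s}\|U^\top\mathbf{e}\|_\infty$.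
   Context: For $\mathbf{x}\in\mathbb{R}^d$, $\mathcal{S}(\mathbf{x})=\{i:[\mathbf{x}]_i\neq 0\}$; $\mathbf{x}$ is $s$-sparse if $|\mathcal{S}(\mathbf{x})|\le s$. $U_{\mathcal T}$ is the column submatrix of $U$ indexed by $\mathcal T$. $\delta_s$ is the smallest constant $\ge0$ with $(1-\delta_s)\|\mathbf{v}\|_2^2\le\|U_{\mathcal T}\mathbf{v}\|_2^2\le(1+\delta_s)\|\mathbf{v}\|_2^2$ for all $|\mathcal T|\le s$, $\mathbf{v}\in\mathbb{R}^{|\mathcal T|}$. $\theta_{s,s}$ (with $2s\le d$) is the smallest constant with $|\langle U_{\mathcal T}\mathbf{v},U_{\mathcal T'}\mathbf{v}'\rangle|\le\theta_{s,s}\|\mathbf{v}\|_2\|\mathbf{v}'\|_2$ for all disjoint $\mathcal T,\mathcal T'$ of size at most $s$. Algorithm 1: given $\lambda_1,\lambda_2,\ldots>0$, set $\mathbf{x}_1=0$ and for $t\ge1$, $\widehat{\mathbf{x}}_t=\mathbf{x}_t-U^\top(U\mathbf{x}_t-\mathbf{y})$, $\mathbf{x}_{t+1}=\mathrm{sign}(\widehat{\mathbf{x}}_t)[|\widehat{\mathbf{x}}_t|-\lambda_t]_+$ (componentwise soft-thresholding). $\mathcal{S}_t=\mathcal{S}(\mathbf{x}_t)$, $\mathcal{S}_*=\mathcal{S}(\mathbf{x}_* )$. *)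

(* Defs.v *)
From HB Require Import structures.
From mathcomp Require Import all_boot all_order all_algebra.
From mathcomp Require Import all_classical all_reals.
Set Implicit Arguments. Unset Strict Implicit. Unset Printing Implicit Defensive.
Import Order.TTheory GRing.Theory Num.Theory.
Local Open Scope ring_scope.
Local Open Scope classical_set_scope.

Section Defs.
Variable R : realType.

Definition sqnorm2 k (v : 'cV[R]_k) : R := \sum_(i < k) (v i 0) ^+ 2.
Definition norm2 k (v : 'cV[R]_k) : R := Num.sqrt (sqnorm2 v).
Definition inner k (a b : 'cV[R]_k) : R := \sum_(i < k) a i 0 * b i 0.
Definition norminf k (v : 'cV[R]_k) : R := \big[Num.max/0]_(i < k) `|v i 0|.

Definition supp k (v : 'cV[R]_k) : {set 'I_k} := [set i | v i 0 != 0].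

(* U_T : the column submatrix of U indexed by T (columns in increasing order) *)
Definition subcols n d (U : 'M[R]_(n, d)) (T : {set 'I_d}) : 'M[R]_(n, #|T|) :=
  colsub (@enum_val _ (mem T)) U.

Definition rip_set n d (U : 'M[R]_(n, d)) (s : nat) : set R :=
  [set c | 0 <= c /\
    forall T : {set 'I_d}, (#|T| <= s)%N -> forall v : 'cV[R]_#|T|,
      (1 - c) * sqnorm2 v <= sqnorm2 (subcols U T *m v) /\
      sqnorm2 (subcols U T *m v) <= (1 + c) * sqnorm2 v].
Definition rip_delta n d (U : 'M[R]_(n, d)) (s : nat) : R := inf (rip_set U s).

Definition roc_set n d (U : 'M[R]_(n, d)) (s : nat) : set R :=
  [set c | 0 <= c /\
    forall T T' : {set 'I_d}, (T :&: T' == finset.set0) -> (#|T| <= s)%N -> (#|T'| <= s)%N ->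
      forall (v : 'cV[R]_#|T|) (v' : 'cV[R]_#|T'|),
        `|inner (subcols U T *m v) (subcols U T' *m v')| <= c * norm2 v * norm2 v'].
Definition roc_theta n d (U : 'M[R]_(n, d)) (s : nat) : R := inf (roc_set U s).

Definition soft d (v : 'cV[R]_d) (lam : R) : 'cV[R]_d :=
  \col_i (Num.sg (v i 0) * Num.max (`|v i 0| - lam) 0).

(* Algorithm 1: iterates x_t for t >= 1 (x_0 is an unused dummy, set to 0);
   x_1 = 0, x_{t+1} = soft(x_t - U^T (U x_t - y), lam_t). *)
Fixpoint alg1 n d (U : 'M[R]_(n, d)) (y : 'cV[R]_n) (lam : nat -> R) (t : nat)
  : 'cV[R]_d :=
  match t with
  | 0 => 0
  | t'.+1 =>
      match t' with
      | 0 => 0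
      | _ => let x := alg1 U y lam t' in
             soft (x - U^T *m (U *m x - y)) (lam t')
      end
  end.

End Defs.

(* Main.v *)
Require Import Defs.
From HB Require Import structures.
From mathcomp Require Import all_boot all_order all_algebra.
From mathcomp Require Import all_classical all_reals.
From mathcomp Require Import ring lra.
Import Order.TTheory GRing.Theory Num.Theory.
Local Open Scope ring_scope.

Set Implicit Arguments. Unset Strict Implicit. Unset Printing Implicit Defensive.



Section Vec.
Variable R : realType.
Implicit Types (k : nat).

Lemma sqnorm2E k (v : 'cV[R]_k) : sqnorm2 v = inner v v.
Proof. by apply: eq_bigr => i _; rewrite expr2. Qed.

Lemma sqnorm2_ge0 k (v : 'cV[R]_k) : 0 <= sqnorm2 v.
Proof. by apply: sumr_ge0 => i _; rewrite sqr_ge0. Qed.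

Lemma norm2_ge0 k (v : 'cV[R]_k) : 0 <= norm2 v.
Proof. exact: sqrtr_ge0. Qed.

Lemma sqr_norm2 k (v : 'cV[R]_k) : norm2 v ^+ 2 = sqnorm2 v.
Proof. by rewrite sqr_sqrtr // sqnorm2_ge0. Qed.

Lemma innerC k (a b : 'cV[R]_k) : inner a b = inner b a.
Proof. by apply: eq_bigr => i _; rewrite mulrC. Qed.

Lemma innerDl k (a b c : 'cV[R]_k) : inner (a + b) c = inner a c + inner b c.
Proof. by rewrite /inner -big_split; apply: eq_bigr => i _; rewrite !mxE mulrDl. Qed.

Lemma innerDr k (a b c : 'cV[R]_k) : inner c (a + b) = inner c a + inner c b.
Proof. by rewrite innerC innerDl !(innerC c). Qed.

Lemma innerZl k x (a b : 'cV[R]_k) : inner (x *: a) b = x * inner a b.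
Proof. by rewrite /inner mulr_sumr; apply: eq_bigr => i _; rewrite !mxE mulrA. Qed.

Lemma innerZr k x (a b : 'cV[R]_k) : inner a (x *: b) = x * inner a b.
Proof. by rewrite innerC innerZl innerC. Qed.

Lemma innerNl k (a b : 'cV[R]_k) : inner (- a) b = - inner a b.
Proof. by rewrite -scaleN1r innerZl mulN1r. Qed.

Lemma innerNr k (a b : 'cV[R]_k) : inner a (- b) = - inner a b.
Proof. by rewrite innerC innerNl innerC. Qed.

Lemma innerBl k (a b c : 'cV[R]_k) : inner (a - b) c = inner a c - inner b c.
Proof. by rewrite innerDl innerNl. Qed.

Lemma innerBr k (a b c : 'cV[R]_k) : inner c (a - b) = inner c a - inner c b.
Proof. by rewrite innerDr innerNr. Qed.

Lemma inner0l k (b : 'cV[R]_k) : inner 0 b = 0.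
Proof. by rewrite /inner big1 // => i _; rewrite mxE mul0r. Qed.

Lemma CS_sq k (a b : 'cV[R]_k) : inner a b ^+ 2 <= sqnorm2 a * sqnorm2 b.
Proof.
rewrite !sqnorm2E.
have hA := sqnorm2_ge0 a; rewrite sqnorm2E in hA.
have key t : 0 <= inner a a * t ^+ 2 - 2 * inner a b * t + inner b b.
  have -> : inner a a * t ^+ 2 - 2 * inner a b * t + inner b b
     = sqnorm2 (t *: a - b).
    rewrite sqnorm2E innerBl !innerBr !innerZl !innerZr (innerC b a).
    by rewrite expr2; ring.
  exact: sqnorm2_ge0.
have [A0|Apos] := eqVneq (inner a a) 0.
  have a0 : inner a b = 0.
    have : sqnorm2 a = 0 by rewrite sqnorm2E.
    move/psumr_eq0P => h0; rewrite /inner big1 // => i _.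
    have /eqP := h0 (fun j _ => sqr_ge0 (a j 0)) i isT.
    rewrite sqrf_eq0 => /eqP ->.
    by rewrite mul0r.
  by rewrite a0 expr0n /= mulr_ge0 // -sqnorm2E sqnorm2_ge0.
have Apos' : 0 < inner a a by rewrite lt_def Apos hA.
have := key (inner a b / inner a a).
set A := inner a a; set B := inner b b; set C := inner a b => h.
have e : A * (C / A) ^+ 2 - 2 * C * (C / A) + B = B - C ^+ 2 / A.
  by field; rewrite Apos.
rewrite e subr_ge0 ler_pdivrMr // in h.
by rewrite mulrC.
Qed.
End Vec.



Section Vec2.
Variable R : realType.
Implicit Types (k : nat).

Lemma norm2_le k (a : 'cV[R]_k) x : 0 <= x -> (norm2 a <= x) = (sqnorm2 a <= x ^+ 2).
Proof. by move=> x0; rewrite -ler_sqr ?sqr_norm2 // nnegrE ?norm2_ge0. Qed.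

Lemma inner_le k (a b : 'cV[R]_k) : `|inner a b| <= norm2 a * norm2 b.
Proof.
rewrite -ler_sqr ?nnegrE ?mulr_ge0 ?norm2_ge0 //.
by rewrite real_normK ?num_real // (exprMn 2 (norm2 a)) !sqr_norm2 CS_sq.
Qed.

Lemma inner_le' k (a b : 'cV[R]_k) : inner a b <= norm2 a * norm2 b.
Proof. exact: le_trans (ler_norm _) (inner_le a b). Qed.

Lemma norm2_triangle k (a b : 'cV[R]_k) : norm2 (a + b) <= norm2 a + norm2 b.
Proof.
rewrite norm2_le ?addr_ge0 ?norm2_ge0 //.
rewrite sqnorm2E innerDl !innerDr (innerC b a) -!sqnorm2E -!sqr_norm2.
have := inner_le' a b; set C := inner a b => h.
rewrite sqrrD; lra.
Qed.

Lemma norm2_mono k (a b : 'cV[R]_k) : (forall i, `|a i 0| <= b i 0) -> norm2 a <= norm2 b.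
Proof.
move=> h; apply: ler_wsqrtr; apply: ler_sum => i _.
rewrite -(real_normK (num_real (a i 0))) ler_sqr ?nnegrE //.
exact: le_trans (normr_ge0 _) (h i).
Qed.

Lemma norm2N k (a : 'cV[R]_k) : norm2 (- a) = norm2 a.
Proof. by rewrite /norm2 /sqnorm2; congr Num.sqrt; apply: eq_bigr => i _; rewrite mxE sqrrN. Qed.

Lemma norm2_triangleB k (a b : 'cV[R]_k) : norm2 (a - b) <= norm2 a + norm2 b.
Proof. by rewrite -(norm2N b) norm2_triangle. Qed.

End Vec2.



Section Proj.
Variable R : realType.
Implicit Types (k : nat).

Definition prj k (A : {set 'I_k}) (v : 'cV[R]_k) : 'cV[R]_k :=
  \col_i (if i \in A then v i 0 else 0).

Lemma projE k A (v : 'cV[R]_k) i : prj A v i 0 = if i \in A then v i 0 else 0.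
Proof. by rewrite mxE. Qed.

Lemma in_supp k (v : 'cV[R]_k) i : (i \in supp v) = (v i 0 != 0).
Proof. by rewrite inE. Qed.

Lemma supp_proj k (A : {set 'I_k}) (v : 'cV[R]_k) : supp (prj A v) \subset A :&: supp v.
Proof.
apply/fintype.subsetP => i; rewrite !inE projE.
by case: (i \in A) => //=; rewrite eqxx.
Qed.

Lemma notin_supp k (v : 'cV[R]_k) i : i \notin supp v -> v i 0 = 0.
Proof. by rewrite in_supp negbK => /eqP. Qed.

Lemma inner_disj k (a b : 'cV[R]_k) : supp a :&: supp b = finset.set0 -> inner a b = 0.
Proof.
move=> h; rewrite /inner big1 // => i _.
have : i \notin supp a :&: supp b by rewrite h inE.
rewrite inE negb_and => /orP [] /notin_supp ->; by rewrite ?mul0r ?mulr0.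
Qed.

Lemma proj_id k (A : {set 'I_k}) (v : 'cV[R]_k) : supp v \subset A -> prj A v = v.
Proof.
move=> /fintype.subsetP h; apply/matrixP => i j; rewrite (ord1 j) projE.
case: ifP => // iA; apply/esym/notin_supp; apply/negP => /h; by rewrite iA.
Qed.

Lemma proj_split k (A : {set 'I_k}) (v : 'cV[R]_k) : v = prj A v + prj (~: A) v.
Proof.
apply/matrixP => i j; rewrite (ord1 j) mxE !projE inE.
by case: (i \in A); rewrite ?addr0 ?add0r.
Qed.

Lemma sqnorm2_split k (A : {set 'I_k}) (v : 'cV[R]_k) :
  sqnorm2 v = sqnorm2 (prj A v) + sqnorm2 (prj (~: A) v).
Proof.
rewrite /sqnorm2 -big_split; apply: eq_bigr => i _; rewrite !projE inE.
by case: (i \in A); rewrite /= expr0n /= ?addr0 ?add0r.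
Qed.

Lemma sqnorm2_proj_le k (A : {set 'I_k}) (v : 'cV[R]_k) : sqnorm2 (prj A v) <= sqnorm2 v.
Proof. by rewrite (sqnorm2_split A v) lerDl sqnorm2_ge0. Qed.

Lemma norm2_proj_le k (A : {set 'I_k}) (v : 'cV[R]_k) : norm2 (prj A v) <= norm2 v.
Proof. exact/ler_wsqrtr/sqnorm2_proj_le. Qed.

Lemma inner_projl k (A : {set 'I_k}) (a b : 'cV[R]_k) : inner (prj A a) b = inner (prj A a) (prj A b).
Proof.
apply: eq_bigr => i _; rewrite !projE; by case: (i \in A); rewrite ?mul0r.
Qed.

Lemma norminf_ge k (f : 'cV[R]_k) i : `|f i 0| <= norminf f.
Proof. exact: (le_bigmax 0 (fun i => `|f i 0|) i). Qed.

Lemma norminf_ge0 k (f : 'cV[R]_k) : 0 <= norminf f.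
Proof.
rewrite /norminf; elim/big_ind: _ => //= x y hx hy.
by rewrite le_max hx.
Qed.

Lemma sqnorm2_proj_inf k (A : {set 'I_k}) (f : 'cV[R]_k) : sqnorm2 (prj A f) <= #|A|%:R * norminf f ^+ 2.
Proof.
rewrite /sqnorm2 (bigID (fun i => i \in A)) /= [X in _ + X]big1 ?addr0; last first.
  by move=> i /negbTE iA; rewrite projE iA expr0n.
rewrite -sum1_card natr_sum mulr_suml; apply: ler_sum => i iA.
rewrite projE iA mul1r -(real_normK (num_real (f i 0))) ler_sqr ?nnegrE ?norminf_ge0 //.
exact: norminf_ge.
Qed.

Lemma norm2_proj_inf k (A : {set 'I_k}) (f : 'cV[R]_k) : norm2 (prj A f) <= Num.sqrt #|A|%:R * norminf f.
Proof.
rewrite norm2_le ?mulr_ge0 ?sqrtr_ge0 ?norminf_ge0 // exprMn sqr_sqrtr //.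
exact: sqnorm2_proj_inf.
Qed.

End Proj.



Section Mat.
Variable R : realType.

Lemma inner_tr n d (U : 'M[R]_(n, d)) a b : inner a (U^T *m b) = inner (U *m a) b.
Proof.
rewrite /inner.
under eq_bigr => i _ do rewrite mxE mulr_sumr.
under [RHS]eq_bigr => i _ do rewrite mxE mulr_suml.
rewrite exchange_big; apply: eq_bigr => i _; apply: eq_bigr => j _.
by rewrite mxE; ring.
Qed.

Definition compress d (T : {set 'I_d}) (w : 'cV[R]_d) : 'cV[R]_#|T| :=
  \col_k w (@enum_val _ (mem T) k) 0.

Lemma sum_in_supp d (T : {set 'I_d}) (w : 'cV[R]_d) (F : 'I_d -> R) :
  supp w \subset T -> (forall j, w j 0 = 0 -> F j = 0) ->
  \sum_(j in T) F j = \sum_j F j.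
Proof.
move=> /fintype.subsetP h hF; rewrite [RHS](bigID (fun j => j \in T)) /=.
rewrite [X in _ = _ + X]big1 ?addr0 // => j jT; apply: hF.
apply: notin_supp; apply/negP => /h; by rewrite (negbTE jT).
Qed.

Lemma subcols_mul n d (U : 'M[R]_(n, d)) (T : {set 'I_d}) (w : 'cV[R]_d) : supp w \subset T ->
  subcols U T *m compress T w = U *m w.
Proof.
move=> h; apply/matrixP => i j0; rewrite (ord1 j0) !mxE.
rewrite -(sum_in_supp h (F := fun j => U i j * w j 0)); last by move=> j ->; rewrite mulr0.
rewrite [RHS]big_enum_val; apply: eq_bigr => k _; by rewrite !mxE.
Qed.

Lemma sqnorm2_compress d (T : {set 'I_d}) (w : 'cV[R]_d) : supp w \subset T ->
  sqnorm2 (compress T w) = sqnorm2 w.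
Proof.
move=> h; rewrite /sqnorm2 -(sum_in_supp h (F := fun j => w j 0 ^+ 2)); last by move=> j ->; rewrite expr0n.
rewrite [RHS]big_enum_val; apply: eq_bigr => k _; by rewrite !mxE.
Qed.

Lemma norm2_compress d (T : {set 'I_d}) (w : 'cV[R]_d) : supp w \subset T ->
  norm2 (compress T w) = norm2 w.
Proof. by move=> h; rewrite /norm2 sqnorm2_compress. Qed.

Definition frob n m (A : 'M[R]_(n, m)) : R := \sum_i \sum_j A i j ^+ 2.

Lemma frob_ge0 n m (A : 'M[R]_(n, m)) : 0 <= frob A.
Proof. by apply: sumr_ge0 => i _; apply: sumr_ge0 => j _; rewrite sqr_ge0. Qed.

Lemma sqnorm2_mul n m (A : 'M[R]_(n, m)) v : sqnorm2 (A *m v) <= frob A * sqnorm2 v.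
Proof.
rewrite /frob mulr_suml; apply: ler_sum => i _.
have := CS_sq (\col_j A i j) v.
rewrite /inner /sqnorm2 mxE.
have e1 : \sum_(i0 < m) (\col_j A i j) i0 0 * v i0 0 = \sum_j A i j * v j 0.
  by apply: eq_bigr => j _; rewrite mxE.
have e2 : \sum_(i0 < m) (\col_j A i j) i0 0 ^+ 2 = \sum_j A i j ^+ 2.
  by apply: eq_bigr => j _; rewrite mxE.
by rewrite e1 e2.
Qed.

Lemma frob_subcols n d (U : 'M[R]_(n, d)) (T : {set 'I_d}) : frob (subcols U T) <= frob U.
Proof.
apply: ler_sum => i _.
have -> : \sum_j subcols U T i j ^+ 2 = \sum_(j in T) U i j ^+ 2.
  by rewrite [RHS]big_enum_val; apply: eq_bigr => k _; rewrite mxE.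
rewrite [X in _ <= X](bigID (fun j => j \in T)) /= lerDl.
by apply: sumr_ge0 => j _; rewrite sqr_ge0.
Qed.

Lemma norm2_mul n m (A : 'M[R]_(n, m)) v : norm2 (A *m v) <= Num.sqrt (frob A) * norm2 v.
Proof.
rewrite norm2_le ?mulr_ge0 ?sqrtr_ge0 ?norm2_ge0 // exprMn sqr_sqrtr ?frob_ge0 //.
by rewrite sqr_norm2 sqnorm2_mul.
Qed.

Lemma rip_set_ne n d (U : 'M[R]_(n, d)) s : rip_set U s (1 + frob U).
Proof.
have F0 := frob_ge0 U.
split; first by lra.
move=> T _ v; split.
  apply: le_trans (sqnorm2_ge0 _); rewrite mulr_le0_ge0 ?sqnorm2_ge0 //; lra.
apply: le_trans (sqnorm2_mul _ _) _; apply: ler_wpM2r; first exact: sqnorm2_ge0.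
have := frob_subcols U T; lra.
Qed.

Lemma roc_set_ne n d (U : 'M[R]_(n, d)) s : roc_set U s (frob U).
Proof.
split; first exact: frob_ge0.
move=> T T' _ _ _ v v'.
apply: le_trans (inner_le _ _) _.
have h1 := norm2_mul (subcols U T) v.
have h2 := norm2_mul (subcols U T') v'.
have g1 : Num.sqrt (frob (subcols U T)) <= Num.sqrt (frob U) by apply/ler_wsqrtr/frob_subcols.
have g2 : Num.sqrt (frob (subcols U T')) <= Num.sqrt (frob U) by apply/ler_wsqrtr/frob_subcols.
have e : frob U = Num.sqrt (frob U) * Num.sqrt (frob U).
  by rewrite -expr2 sqr_sqrtr // frob_ge0.
rewrite e.
have := norm2_ge0 v; have := norm2_ge0 v'; have := norm2_ge0 (subcols U T *m v).
have := norm2_ge0 (subcols U T' *m v'); have := sqrtr_ge0 (frob U).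
have := sqrtr_ge0 (frob (subcols U T)); have := sqrtr_ge0 (frob (subcols U T')).
move: h1 h2 g1 g2.
set a := norm2 (subcols U T *m v); set b := norm2 (subcols U T' *m v').
set x := Num.sqrt (frob U); set p := Num.sqrt (frob (subcols U T)); set q := Num.sqrt (frob (subcols U T')).
set u := norm2 v; set u' := norm2 v' => h1 h2 g1 g2 q0 p0 x0 b0 a0 u0' u0.
have ha : a <= x * u by apply: le_trans h1 _; apply: ler_wpM2r.
have hb : b <= x * u' by apply: le_trans h2 _; apply: ler_wpM2r.
apply: le_trans (_ : (x * u) * (x * u') <= _); first by apply: ler_pM.
by rewrite le_eqVlt; apply/orP; left; apply/eqP; ring.
Qed.

Lemma eps_le (x y K : R) : 0 <= K -> (forall eps, 0 < eps -> x <= y + eps * K) -> x <= y.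
Proof.
move=> K0 h; apply/ler_addgt0Pr => e e0.
have K1 : 0 < K + 1 by lra.
have := h (e / (K + 1)) (divr_gt0 e0 K1).
move=> h'; apply: le_trans h' _; rewrite lerD2l.
rewrite mulrAC ler_pdivrMr // ler_pM2l //; lra.
Qed.

Lemma inf_approx (E : set R) c0 : E c0 -> (forall c, E c -> 0 <= c) ->
  0 <= inf E /\ forall eps, 0 < eps -> exists2 c, E c & c < inf E + eps.
Proof.
move=> Ec0 pos; split.
  by apply: lb_le_inf; [exists c0 | move=> c /pos].
move=> eps eps0; apply: inf_adherent => //; split; first by exists c0.
by exists 0 => c /pos.
Qed.

Lemma rip_delta_ge0 n d (U : 'M[R]_(n, d)) s : 0 <= rip_delta U s.
Proof. by case: (inf_approx (rip_set_ne U s)) => [c []|] . Qed.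

Lemma roc_theta_ge0 n d (U : 'M[R]_(n, d)) s : 0 <= roc_theta U s.
Proof. by case: (inf_approx (roc_set_ne U s)) => [c []|] . Qed.

Lemma rip_vec n d (U : 'M[R]_(n, d)) s (w : 'cV[R]_d) : (#|supp w| <= s)%N ->
  (1 - rip_delta U s) * sqnorm2 w <= sqnorm2 (U *m w) /\
  sqnorm2 (U *m w) <= (1 + rip_delta U s) * sqnorm2 w.
Proof.
move=> hs.
have [_ ap] := inf_approx (rip_set_ne U s) (fun c h => proj1 h).
have X0 := sqnorm2_ge0 w.
have get eps : 0 < eps -> exists2 c, c < rip_delta U s + eps &
   (1 - c) * sqnorm2 w <= sqnorm2 (U *m w) /\ sqnorm2 (U *m w) <= (1 + c) * sqnorm2 w.
  move=> /ap [c [_ hc] lt]; exists c => //.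
  have := hc (supp w) hs (compress (supp w) w).
  by rewrite subcols_mul // sqnorm2_compress.
split; apply: (eps_le X0) => eps /get [c lt [h1 h2]]; nra.
Qed.

Lemma roc_vec n d (U : 'M[R]_(n, d)) s (T T' : {set 'I_d}) (w w' : 'cV[R]_d) :
  T :&: T' = finset.set0 -> (#|T| <= s)%N -> (#|T'| <= s)%N ->
  supp w \subset T -> supp w' \subset T' ->
  `|inner (U *m w) (U *m w')| <= roc_theta U s * norm2 w * norm2 w'.
Proof.
move=> hTT hT hT' sw sw'.
have [_ ap] := inf_approx (roc_set_ne U s) (fun c h => proj1 h).
have K0 : 0 <= norm2 w * norm2 w' by rewrite mulr_ge0 ?norm2_ge0.
apply: (eps_le K0) => eps /ap [c [_ hc] lt].
have := hc T T' (introT eqP hTT) hT hT' (compress T w) (compress T' w').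
rewrite !subcols_mul // !norm2_compress // => h.
rewrite -!mulrA in h *; nra.
Qed.

End Mat.



Section Core.
Variable R : realType.

Lemma supp_sub k (a b c : 'cV[R]_k) :
  (forall i, a i 0 = 0 -> b i 0 = 0 -> c i 0 = 0) -> supp c \subset supp a :|: supp b.
Proof.
move=> h; apply/fintype.subsetP => i; rewrite !inE.
apply: contraR; rewrite negb_or !negbK => /andP [/eqP ha /eqP hb].
by rewrite h.
Qed.

Lemma sqnorm2_eq0 k (a : 'cV[R]_k) : sqnorm2 a = 0 -> a = 0.
Proof.
move/psumr_eq0P => h0; apply/matrixP => i j; rewrite (ord1 j) mxE.
have /eqP := h0 (fun j _ => sqr_ge0 (a j 0)) i isT.
by rewrite sqrf_eq0 => /eqP.
Qed.

Lemma norm2_eq0 k (a : 'cV[R]_k) : norm2 a = 0 -> a = 0.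
Proof.
move=> h; apply: sqnorm2_eq0; by rewrite -sqr_norm2 h expr0n.
Qed.

Lemma norm2Z k x (a : 'cV[R]_k) : norm2 (x *: a) = `|x| * norm2 a.
Proof.
rewrite /norm2 -(sqrtr_sqr x) -sqrtrM ?sqr_ge0 //; congr Num.sqrt.
rewrite /sqnorm2 mulr_sumr; apply: eq_bigr => i _; by rewrite mxE exprMn.
Qed.

Definition Xf n d (U : 'M[R]_(n, d)) (a b : 'cV[R]_d) := inner a b - inner (U *m a) (U *m b).

Lemma rip_bil n d (U : 'M[R]_(n, d)) k (W : {set 'I_d}) (a b : 'cV[R]_d) :
  (#|W| <= k)%N -> supp a \subset W -> supp b \subset W ->
  `|Xf U a b| <= rip_delta U k * norm2 a * norm2 b.
Proof.
move=> hW sa sb.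
set del := rip_delta U k.
have del0 : 0 <= del by apply: rip_delta_ge0.
have Q v : supp v \subset W -> `|Xf U v v| <= del * sqnorm2 v.
  move=> sv; have := rip_vec U (w := v) (leq_trans (subset_leq_card sv) hW).
  rewrite /Xf -sqnorm2E -/del => -[h1 h2].
  have := sqnorm2_ge0 v; have := sqnorm2_ge0 (U *m v).
  rewrite -sqnorm2E ler_norml; move=> *; apply/andP; split; nra.
have [a0|na] := eqVneq (norm2 a) 0.
  by rewrite a0 mulr0 mul0r (norm2_eq0 a0) /Xf mulmx0 !inner0l subrr normr0.
have [b0|nb] := eqVneq (norm2 b) 0.
  by rewrite b0 mulr0 (norm2_eq0 b0) /Xf mulmx0 innerC inner0l innerC inner0l subrr normr0.
have pa : 0 < norm2 a by rewrite lt_def na norm2_ge0.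
have pb : 0 < norm2 b by rewrite lt_def nb norm2_ge0.
set a' := (norm2 a)^-1 *: a; set b' := (norm2 b)^-1 *: b.
have na' : norm2 a' = 1 by rewrite norm2Z ger0_norm ?invr_ge0 ?norm2_ge0 // mulVf.
have nb' : norm2 b' = 1 by rewrite norm2Z ger0_norm ?invr_ge0 ?norm2_ge0 // mulVf.
have sub v1 v2 (r1 r2 : R) : supp v1 \subset W -> supp v2 \subset W -> supp (r1 *: v1 + r2 *: v2) \subset W.
  move=> h1 h2; apply: (@fintype.subset_trans _ _ (supp v1 :|: supp v2)); last by rewrite finset.subUset h1 h2.
  by apply: (@supp_sub _ v1 v2) => i z1 z2; rewrite !mxE z1 z2 !mulr0 addr0.
have XZ x y : Xf U (x *: a) (y *: b) = x * y * Xf U a b.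
  by rewrite /Xf -!scalemxAr !innerZl !innerZr; ring.
have Xpol v1 v2 : Xf U (v1 + v2) (v1 + v2) - Xf U (v1 - v2) (v1 - v2) = 4%:R * Xf U v1 v2.
  rewrite /Xf !mulmxBr !mulmxDr ?innerBl ?innerBr ?innerDl ?innerDr ?innerBl ?innerBr ?innerDl ?innerDr.
  rewrite (innerC v2 v1) (innerC (U *m v2) (U *m v1)); ring.
have sZ (x : R) (v : 'cV[R]_d) : supp v \subset W -> supp (x *: v) \subset W.
  move=> h; apply: (@fintype.subset_trans _ _ (supp v :|: supp v)); last by rewrite finset.subUset h.
  by apply: (@supp_sub _ v v (x *: v)) => i z1 _; rewrite !mxE z1 mulr0.
have sD (v1 v2 : 'cV[R]_d) : supp v1 \subset W -> supp v2 \subset W -> supp (v1 + v2) \subset W.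
  move=> h1 h2; apply: (@fintype.subset_trans _ _ (supp v1 :|: supp v2)); last by rewrite finset.subUset h1 h2.
  by apply: (@supp_sub _ v1 v2 (v1 + v2)) => i z1 z2; rewrite !mxE z1 z2 addr0.
have sa' : supp a' \subset W by apply: sZ.
have sb' : supp b' \subset W by apply: sZ.
have hp := Q _ (sD _ _ sa' sb').
have hm := Q _ (sD _ _ sa' (sZ (-1) _ sb')).
rewrite scaleN1r in hm.
have sqp : sqnorm2 (a' + b') + sqnorm2 (a' - b') = 4%:R.
  rewrite !sqnorm2E ?innerBl ?innerBr ?innerDl ?innerDr ?innerBl ?innerBr ?innerDl ?innerDr (innerC b' a') -!sqnorm2E.
  rewrite -!sqr_norm2 na' nb'; ring.
have key : `|Xf U a' b'| <= del.
  have e := Xpol a' b'.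
  have : `|4%:R * Xf U a' b'| <= del * 4%:R.
    rewrite -e -sqp mulrDr; apply: le_trans (ler_normB _ _) _; exact: lerD.
  by rewrite normrM ger0_norm // mulrC ler_pM2r.
rewrite /a' /b' XZ normrM ger0_norm ?mulr_ge0 ?invr_ge0 ?norm2_ge0 // in key.
rewrite -ler_pdivlMl ?mulr_gt0 ?invr_gt0 // in key.
rewrite invfM !invrK in key.
by rewrite -mulrA mulrC.
Qed.

End Core.



Section G.
Variable R : realType.

Lemma inner_disj' k (A B : {set 'I_k}) (a b : 'cV[R]_k) :
  A :&: B = finset.set0 -> supp a \subset A -> supp b \subset B -> inner a b = 0.
Proof.
move=> hAB sa sb; apply: inner_disj; apply/eqP; rewrite -finset.subset0 -hAB.
exact: finset.setISS.
Qed.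

Lemma proj_g_sq n d (U : 'M[R]_(n, d)) (S : {set 'I_d}) h :
  sqnorm2 (prj S (h - U^T *m (U *m h))) = Xf U (prj S (h - U^T *m (U *m h))) h.
Proof.
by rewrite sqnorm2E -inner_projl innerBr inner_tr.
Qed.

Lemma div_step (W K : R) : 0 <= W -> 0 <= K -> W ^+ 2 <= W * K -> W <= K.
Proof.
move=> W0 K0 h; have [->|nW] := eqVneq W 0; first by [].
have pW : 0 < W by rewrite lt_def nW W0.
by rewrite -(ler_pM2l pW) -expr2.
Qed.

Lemma G1 n d (U : 'M[R]_(n, d)) k (W S : {set 'I_d}) h :
  (#|W| <= k)%N -> S \subset W -> supp h \subset W ->
  norm2 (prj S (h - U^T *m (U *m h))) <= rip_delta U k * norm2 h.
Proof.
move=> hW SW sh; set w := prj S _.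
apply: div_step; [exact: norm2_ge0 | by rewrite mulr_ge0 ?rip_delta_ge0 ?norm2_ge0 |].
rewrite sqr_norm2 proj_g_sq -/w.
have sw : supp w \subset W.
  apply: fintype.subset_trans (supp_proj _ _) _; exact: fintype.subset_trans (finset.subsetIl _ _) SW.
apply: le_trans (ler_norm _) _; apply: le_trans (rip_bil U hW sw sh) _.
by rewrite (mulrC (norm2 w)) -!mulrA (mulrC (norm2 w)).
Qed.

Lemma real_comb (W A B C N del th : R) : 0 <= A -> 0 <= B -> 0 <= C -> 0 <= N ->
  0 <= del -> 0 <= th -> N ^+ 2 = A ^+ 2 + B ^+ 2 + C ^+ 2 -> 0 <= W ->
  W ^+ 2 <= W * (del * A + th * B + th * C) -> W <= (del + Num.sqrt 2 * th) * N.
Proof.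
move=> A0 B0 C0 N0 d0 t0 hN W0 hW.
have K0 : 0 <= del * A + th * B + th * C by rewrite !addr_ge0 ?mulr_ge0.
have := div_step W0 K0 hW => h1.
have hA : A <= N.
  by rewrite -ler_sqr ?nnegrE // hN -addrA lerDl addr_ge0 ?sqr_ge0.
have s2 : Num.sqrt 2 ^+ 2 = 2 :> R by rewrite sqr_sqrtr.
have s20 : 0 <= Num.sqrt 2 :> R by apply: sqrtr_ge0.
have hBC : B + C <= Num.sqrt 2 * N.
  rewrite -ler_sqr ?nnegrE ?addr_ge0 ?mulr_ge0 // exprMn s2 hN.
  have := sqr_ge0 (B - C); rewrite sqrrB => hh; rewrite sqrrD.
  have := sqr_ge0 A; nra.
nra.
Qed.

Lemma G2 n d (U : 'M[R]_(n, d)) s (T Sst St : {set 'I_d}) h :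
  T :&: Sst = finset.set0 -> (#|T| <= s)%N -> (#|Sst| <= s)%N -> (#|St :\: Sst| <= s)%N ->
  supp h \subset St :|: Sst ->
  norm2 (prj T (h - U^T *m (U *m h))) <= (rip_delta U s + Num.sqrt 2 * roc_theta U s) * norm2 h.
Proof.
move=> hTS hT hS hSt sh.
set w := prj T _.
set ha := prj T h; set hb := prj (~: T) h.
set h1 := prj Sst hb; set h2 := prj (~: Sst) hb.
have eh : h = ha + hb by apply: proj_split.
have ehb : hb = h1 + h2 by apply: proj_split.
have sw : supp w \subset T.
  exact: fintype.subset_trans (supp_proj _ _) (finset.subsetIl _ _).
have sha : supp ha \subset T.
  exact: fintype.subset_trans (supp_proj _ _) (finset.subsetIl _ _).
have shb : supp hb \subset ~: T.
  exact: fintype.subset_trans (supp_proj _ _) (finset.subsetIl _ _).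
have sh1 : supp h1 \subset Sst.
  exact: fintype.subset_trans (supp_proj _ _) (finset.subsetIl _ _).
set T2 := (St :\: Sst) :\: T.
have sh2 : supp h2 \subset T2.
  apply/fintype.subsetP => i; rewrite /h2 /hb !inE !projE !inE.
  case Si: (i \in Sst); case Ti: (i \in T); rewrite /= ?eqxx // => hi.
  have : i \in St :|: Sst by apply: (fintype.subsetP sh); rewrite inE.
  by rewrite inE Si orbF.
have hT2 : (#|T2| <= s)%N.
  by apply: leq_trans hSt; apply: subset_leq_card; apply: finset.subsetDl.
have dT2 : T :&: T2 = finset.set0.
  apply/finset.setP => i; rewrite !inE; by case: (i \in T); rewrite ?andbF.
have w0 : inner w hb = 0 := inner_disj' (finset.setICr T) sw shb.
have X1 : sqnorm2 w = Xf U w ha - inner (U *m w) (U *m h1) - inner (U *m w) (U *m h2).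
  rewrite /w proj_g_sq -/w /Xf {1 2}eh !mulmxDr !innerDr w0 ehb !mulmxDr !innerDr; ring.
have r1 := rip_bil U hT sw sha.
have r2 := roc_vec U hTS hT hS sw sh1.
have r3 := roc_vec U dT2 hT hT2 sw sh2.
have hn : norm2 h ^+ 2 = norm2 ha ^+ 2 + norm2 h1 ^+ 2 + norm2 h2 ^+ 2.
  by rewrite !sqr_norm2 (sqnorm2_split T h) -/ha -/hb (sqnorm2_split Sst hb) -/h1 -/h2 addrA.
apply: (real_comb (A := norm2 ha) (B := norm2 h1) (C := norm2 h2)); rewrite ?norm2_ge0 ?rip_delta_ge0 ?roc_theta_ge0 //.
rewrite sqr_norm2 X1.
have e1 := ler_norm (Xf U w ha).
have e2 := ler_norm (- inner (U *m w) (U *m h1)).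
have e3 := ler_norm (- inner (U *m w) (U *m h2)).
rewrite normrN in e2; rewrite normrN in e3.
lra.
Qed.

End G.



Section Soft.
Variable R : realType.

Definition sf (lam u : R) := Num.sg u * Num.max (`|u| - lam) 0.

Lemma softE d (v : 'cV[R]_d) lam i : soft v lam i 0 = sf lam (v i 0).
Proof. by rewrite mxE. Qed.

Lemma sf_cases (lam u : R) : 0 <= lam ->
  [/\ `|sf lam u| <= `|u|, `|sf lam u - u| <= lam & (sf lam u != 0 -> lam < `|u|)].
Proof.
move=> l0; rewrite /sf.
have [u0|u0|->] := ltrgtP u 0.
- rewrite (ltr0_sg u0) (ltr0_norm u0).
  have [hm|hm] := leP (- u - lam) 0.
  + rewrite mulr0 eqxx; split => //; rewrite ?normr0 ?sub0r ?normrN ?(ltr0_norm u0); lra.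
  + idtac.
    split; rewrite ?ler_norml; try (apply/andP; split); try lra.
- rewrite (gtr0_sg u0) (gtr0_norm u0).
  have [hm|hm] := leP (u - lam) 0.
  + rewrite mulr0 eqxx; split => //; rewrite ?normr0 ?sub0r ?normrN ?(gtr0_norm u0); lra.
  + idtac.
    split; rewrite ?ler_norml; try (apply/andP; split); try lra.
- by rewrite sgr0 mul0r eqxx sub0r normrN normr0; split.
Qed.
End Soft.



Lemma subset_card k (A : {set 'I_k}) m : (m <= #|A|)%N ->
  exists B : {set 'I_k}, B \subset A /\ #|B| = m.
Proof.
move=> hm; exists [set x in take m (enum A)]; split.
  apply/fintype.subsetP => x; rewrite inE => /mem_take; by rewrite mem_enum.
rewrite cardsE; move/card_uniqP: (take_uniq m (enum_uniq (mem A))) => ->.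
by rewrite size_takel // -cardE.
Qed.

Lemma card_U_le k (A B : {set 'I_k}) : (#|A :|: B| <= #|A :\: B| + #|B|)%N.
Proof.
apply: leq_trans (_ : #|(A :\: B) :|: B| <= _)%N.
  apply: subset_leq_card; apply/fintype.subsetP => i; rewrite !inE.
  by case: (i \in B); rewrite ?orbT ?andbT.
by rewrite cardsU leq_subr.
Qed.

Lemma card_U3_le k (A B C : {set 'I_k}) :
  (#|A :|: B :|: C| <= #|A :\: C| + #|B :\: C| + #|C|)%N.
Proof.
apply: leq_trans (_ : #|((A :\: C) :|: (B :\: C)) :|: C| <= _)%N.
  apply: subset_leq_card; apply/fintype.subsetP => i; rewrite !inE.
  by case: (i \in C); rewrite ?orbT ?andbT.
rewrite cardsU; apply: leq_trans (leq_subr _ _) _.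
by rewrite leq_add2r cardsU leq_subr.
Qed.

Section Step.
Variable R : realType.

Lemma prjD k (A : {set 'I_k}) (a b : 'cV[R]_k) : prj A (a + b) = prj A a + prj A b.
Proof.
apply/matrixP => i j; rewrite (ord1 j) !mxE.
by case: (i \in A); rewrite ?addr0.
Qed.

Lemma sqnorm2_prj_sum k (A : {set 'I_k}) (v : 'cV[R]_k) :
  sqnorm2 (prj A v) = \sum_(i in A) v i 0 ^+ 2.
Proof.
rewrite /sqnorm2 [RHS]big_mkcond; apply: eq_bigr => i _; rewrite projE.
by case: (i \in A); rewrite ?expr0n.
Qed.

Lemma absv_norm2 k (v : 'cV[R]_k) : norm2 (\col_i `|v i 0|) = norm2 v.
Proof.
rewrite /norm2 /sqnorm2; congr Num.sqrt; apply: eq_bigr => i _.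
by rewrite mxE real_normK ?num_real.
Qed.

End Step.



Section Step2.
Variable R : realType.

Lemma step n d s (U : 'M[R]_(n, d)) (xstar : 'cV[R]_d) (e : 'cV[R]_n) (xt : 'cV[R]_d) (Del : R) :
  (#|supp xstar| <= s)%N -> (#|supp xt :\: supp xstar| <= s)%N ->
  norm2 (xt - xstar) <= Del ->
  let K := rip_delta U s + Num.sqrt 2 * roc_theta U s in
  let noise := norminf (U^T *m e) in
  let lam := K / Num.sqrt s%:R * Del + noise in
  let x' := soft (xt - U^T *m (U *m xt - (U *m xstar + e))) lam in
  (#|supp x' :\: supp xstar| <= s)%N /\
  norm2 (x' - xstar) <= (K + rip_delta U (3 * s)) * Del + (1 + Num.sqrt 2) * Num.sqrt s%:R * noise.
Proof.
move=> hSst hSt hDel K noise lam x'.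
pose xhat := xt - U^T *m (U *m xt - (U *m xstar + e)).
set h := xt - xstar.
set g := h - U^T *m (U *m h).
set f := U^T *m e.
have zE : xhat - xstar = g + f.
  rewrite /xhat /g /f /h.
  have -> : U *m xt - (U *m xstar + e) = U *m (xt - xstar) - e.
    by rewrite mulmxBr opprD addrA.
  rewrite mulmxBr.
  set A := U^T *m _; set B := U^T *m e.
  apply/matrixP => i j; rewrite !mxE; ring.
have Del0 : 0 <= Del by apply: le_trans (norm2_ge0 _) hDel.
have K0 : 0 <= K by rewrite /K addr_ge0 ?mulr_ge0 ?sqrtr_ge0 ?rip_delta_ge0 ?roc_theta_ge0.
have n0 : 0 <= noise by apply: norminf_ge0.
have rs0 : 0 <= Num.sqrt s%:R :> R by apply: sqrtr_ge0.
have lam0 : 0 <= lam by rewrite /lam; apply: addr_ge0 => //; apply: mulr_ge0 => //; apply: divr_ge0.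
have sl : Num.sqrt s%:R * lam <= K * Del + Num.sqrt s%:R * noise.
  have [s0|spos] := eqVneq s 0%N.
    by rewrite s0 sqrtr0 !mul0r addr0 mulr_ge0.
  have rsp : 0 < Num.sqrt s%:R :> R by rewrite sqrtr_gt0 ltr0n lt0n.
  rewrite /lam le_eqVlt; apply/orP; left; apply/eqP; field.
  by rewrite gt_eqF.
have sh : supp h \subset supp xt :|: supp xstar.
  by apply: supp_sub => i z1 z2; rewrite !mxE z1 z2 subrr.
have zi i : xhat i 0 - xstar i 0 = g i 0 + f i 0.
  by have := congr1 (fun M : 'cV[R]_d => M i 0) zE; rewrite !mxE.
have x'i i : x' i 0 = sf lam (xhat i 0) by rewrite softE.
have hbig i : i \in supp x' :\: supp xstar -> lam < `|g i 0 + f i 0|.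
  rewrite !inE => /andP [nS nz].
  have xs0 : xstar i 0 = 0 by move: nS; rewrite negbK => /eqP.
  rewrite -zi xs0 subr0.
  have [_ _ H] := sf_cases (xhat i 0) lam0; apply: H; by rewrite -x'i.
have partI : (#|supp x' :\: supp xstar| <= s)%N.
  have [s0|spos] := eqVneq s 0%N.
    have E0 : supp xt :|: supp xstar = finset.set0.
      apply: cards0_eq; apply/eqP; rewrite -leqn0.
      apply: leq_trans (card_U_le _ _) _; rewrite s0 in hSt hSst.
      exact: (leq_add hSt hSst).
    have h0 : h = 0.
      apply/matrixP => i j; rewrite (ord1 j) [RHS]mxE; apply: (notin_supp (v := h)).
      by apply/negP => /(fintype.subsetP sh); rewrite E0 inE.
    have g0 : g = 0 by rewrite /g h0 !mulmx0 subr0.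
    have ln : lam = noise by rewrite /lam s0 sqrtr0 invr0 mulr0 mul0r add0r.
    rewrite s0 leqn0 cards_eq0; apply: contraT => /finset.set0Pn [i hi].
    have := hbig i hi; rewrite g0 mxE add0r ln => lt.
    have := norminf_ge f i; rewrite -/noise; lra.
  rewrite leqNgt; apply/negP => hlt.
  have [T [sT cT]] := subset_card (ltnW hlt).
  have TS : T :&: supp xstar = finset.set0.
    apply/finset.setP => i; rewrite !inE.
    apply/negP => /andP [iT iS]; have := fintype.subsetP sT i iT; by rewrite !inE iS.
  have G := G2 U TS (eq_leq cT) hSst hSt sh.
  have F := norm2_proj_inf T f.
  rewrite cT -/noise in F.
  have rsp : 0 < Num.sqrt s%:R :> R by rewrite sqrtr_gt0 ltr0n lt0n.
  have hz : norm2 (prj T (g + f)) <= Num.sqrt s%:R * lam.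
    rewrite prjD; apply: le_trans (norm2_triangle _ _) _.
    have sle : Num.sqrt s%:R * lam = K * Del + Num.sqrt s%:R * noise.
      rewrite /lam; field; by rewrite gt_eqF.
    rewrite -/g -/K in G; rewrite -/h in hDel.
    have : K * norm2 h <= K * Del by apply: ler_wpM2l.
    lra.
  have hsq : sqnorm2 (prj T (g + f)) <= s%:R * lam ^+ 2.
    move: hz; rewrite norm2_le ?mulr_ge0 // exprMn sqr_sqrtr //.
  have hgt : s%:R * lam ^+ 2 < sqnorm2 (prj T (g + f)).
    rewrite sqnorm2_prj_sum.
    have -> : s%:R * lam ^+ 2 = \sum_(i in T) lam ^+ 2 by rewrite sumr_const cT mulr_natl.
    apply: ltr_sum.
      have : (0 < #|T|)%N by rewrite cT lt0n.
      case/card_gt0P => i0 i0T; apply/hasP; exists i0 => //; exact: mem_index_enum.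
    move=> i iT; rewrite mxE.
    have := hbig i (fintype.subsetP sT i iT) => hl.
    rewrite -(real_normK (num_real (g i 0 + f i 0))) ltr_pXn2r ?nnegrE //.
  lra.
split => //.
set S := supp x' :|: supp xstar.
set W := supp x' :|: supp xt :|: supp xstar.
have cS : (#|S| <= 2 * s)%N.
  apply: leq_trans (card_U_le _ _) _; rewrite mul2n -addnn; exact: leq_add.
have cW : (#|W| <= 3 * s)%N.
  apply: leq_trans (card_U3_le _ _ _) _.
  rewrite (_ : 3 * s = s + s + s)%N; last by rewrite !mulSn mul0n addn0 addnA.
  by rewrite !leq_add.
have SW : S \subset W.
  apply/fintype.subsetP => i; rewrite !inE; by case/orP => ->; rewrite ?orbT.
have hW : supp h \subset W.
  apply: fintype.subset_trans sh _; apply/fintype.subsetP => i; rewrite !inE.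
  by case/orP => ->; rewrite ?orbT.
have G := G1 U cW SW hW; rewrite -/g in G.
have F := norm2_proj_inf S f; rewrite -/noise in F.
have s2 : Num.sqrt #|S|%:R <= Num.sqrt 2 * Num.sqrt s%:R :> R.
  rewrite -sqrtrM // -natrM; apply: ler_wsqrtr; by rewrite ler_nat.
have F2 : norm2 (prj S f) <= Num.sqrt 2 * Num.sqrt s%:R * noise.
  apply: le_trans F _; exact: ler_wpM2r.
set cv := prj (supp xstar) (const_mx lam : 'cV[R]_d).
have hc : norm2 cv <= Num.sqrt s%:R * lam.
  rewrite norm2_le ?mulr_ge0 // exprMn sqr_sqrtr // sqnorm2_prj_sum.
  under eq_bigr => i _ do rewrite mxE.
  rewrite sumr_const -[lam ^+ 2 *+ _]mulr_natr mulrC; apply: ler_wpM2r; [by rewrite sqr_ge0 | by rewrite ler_nat].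
set av := \col_i `|prj S (g + f) i 0|.
have hav : norm2 av <= norm2 (prj S g) + norm2 (prj S f).
  by rewrite /av absv_norm2 prjD; apply: norm2_triangle.
have coord i : `|(x' - xstar) i 0| <= (av + cv) i 0.
  have e1 : (x' - xstar) i 0 = x' i 0 - xstar i 0 by rewrite !mxE.
  have e2 : (av + cv) i 0 = `|if i \in S then g i 0 + f i 0 else 0| + (if i \in supp xstar then lam else 0).
    by rewrite !mxE.
  rewrite e1 e2 x'i -(zi i).
  have [c1 c2 c3] := sf_cases (xhat i 0) lam0.
  case Si: (i \in supp xstar).
    have -> : i \in S by rewrite /S finset.in_setU Si orbT.
    have -> : sf lam (xhat i 0) - xstar i 0 = (sf lam (xhat i 0) - xhat i 0) + (xhat i 0 - xstar i 0) by ring.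
    apply: le_trans (ler_normD _ _) _; lra.
  have xs0 : xstar i 0 = 0 by apply: notin_supp; rewrite Si.
  rewrite xs0 !subr0 addr0.
  have [z0|nz] := eqVneq (sf lam (xhat i 0)) 0; first by rewrite z0 normr0.
  have -> : i \in S by rewrite /S finset.in_setU in_supp x'i nz.
  by [].
have hD : norm2 (x' - xstar) <= norm2 av + norm2 cv.
  apply: le_trans (norm2_triangle _ _); exact: norm2_mono.
have d30 := rip_delta_ge0 U (3 * s).
rewrite -/h in hDel.
have : rip_delta U (3 * s) * norm2 h <= rip_delta U (3 * s) * Del by apply: ler_wpM2l.
lra.
Qed.
End Step2.

Unset Implicit Arguments.


Theorem theorem2 (R : realType) (n d s : nat) (U : 'M[R]_(n, d))
  (xstar : 'cV[R]_d) (e : 'cV[R]_n) (Delta : nat -> R) :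
  (2 * s <= d)%N ->
  (#|supp xstar| <= s)%N ->
  let y := U *m xstar + e in
  let gamma := rip_delta U s + Num.sqrt 2 * roc_theta U s + rip_delta U (3 * s) in
  let noise := norminf (U^T *m e) in
  gamma < 1 ->
  norm2 ((0 : 'cV[R]_d) - xstar) <= Delta 1%N ->
  (forall t : nat, (1 <= t)%N ->
     Delta t.+1 = gamma * Delta t + (1 + Num.sqrt 2) * Num.sqrt s%:R * noise) ->
  let lam := fun t : nat =>
    (rip_delta U s + Num.sqrt 2 * roc_theta U s) / Num.sqrt s%:R * Delta t + noise in
  let x := alg1 U y lam in
  forall t : nat,
    (#|supp (x t.+1) :\: supp xstar| <= s)%N /\
    norm2 (x t.+1 - xstar) <=
      gamma ^+ t * Delta 1%N
      + (1 - gamma ^+ t) / (1 - gamma) * (1 + Num.sqrt 2) * Num.sqrt s%:R * noise.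
Proof.
move=> _ hS y gamma noise hg hD1 hrec lam x.
have main t : (#|supp (x t.+1) :\: supp xstar| <= s)%N /\ norm2 (x t.+1 - xstar) <= Delta t.+1.
  elim: t => [|t [IH1 IH2]].
    have -> : x 1%N = 0 by [].
    split => //.
    apply: leq_trans (_ : #|supp (0 : 'cV[R]_d)| <= s)%N; first by apply: subset_leq_card; apply: finset.subsetDl.
    apply: leq_trans (_ : 0 <= s)%N => //; rewrite leqn0 cards_eq0; apply/eqP/finset.setP => i.
    by rewrite !inE mxE eqxx.
  have -> : x t.+2 = soft (x t.+1 - U^T *m (U *m x t.+1 - y)) (lam t.+1) by [].
  have [h1 h2] := @step R n d s U xstar e (x t.+1) (Delta t.+1) hS IH1 IH2.
  split => //.
  by rewrite hrec.
have cf t : Delta t.+1 = gamma ^+ t * Delta 1%N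
      + (1 - gamma ^+ t) / (1 - gamma) * (1 + Num.sqrt 2) * Num.sqrt s%:R * noise.
  have g1 : 1 - gamma != 0 by rewrite subr_eq0 eq_sym lt_eqF.
  elim: t => [|t IH]; first by rewrite expr0 mul1r subrr mul0r !mul0r addr0.
  rewrite hrec // IH exprS; field; exact: g1.
by move=> t; rewrite -cf; apply: main.
Qed.
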